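(* Let $V$ be a real vector space and $C$ a cone in $V$. Assume that $X$ and $Y$ are decomposably $C$-antichain-convex subsets of $V$ that are disjoint. (1) If $X$ is $C$-upward, then $\operatorname{co}(X)$ and $\operatorname{co}(Y)$ are disjoint. (2) If $X$ is $C$-downward, then $\operatorname{co}(X)$ and $\operatorname{co}(Y)$ are disjoint.
   Context: A cone in a real vector space $V$ is a subset $C$ with $\lambda C\subseteq C$ for all $\lambda>0$ (it may be empty and need not contain $0$). A subset $S\subseteq V$ is $C$-antichain-convex iff for all $x,y\in S$ and $\lambda\in[0,1]$ with $y-x\notin C\cup(-C)$ one has $\lambda x+(1-\lambda)y\in S$. $S$ is decomposably $C$-antichain-convex iff $S=S_1+\dots+S_n$ (Minkowski sum) for finitely many $C$-antichain-convex subsets $S_i$ of $V$. $S$ is $C$-upward iff $x\in S$, $y\in V$... precisely: iff for all $x\in S$ and $y$ with $y-x\in C$ one has $y\in S$ (equivalently $S+C\subseteq S$); $S$ is $C$-downward iff for all $x\in S$ and $y$ with $x-y\in C$ one has $y\in S$. $\operatorname{co}$ denotes the convex hull. *)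

(* Defs.v *)
From HB Require Import structures.
From mathcomp Require Import all_boot all_order all_algebra.
From mathcomp Require Import boolp classical_sets reals.
Set Implicit Arguments. Unset Strict Implicit. Unset Printing Implicit Defensive.
Import Order.TTheory GRing.Theory Num.Theory.
Local Open Scope classical_set_scope.
Local Open Scope ring_scope.

Section Defs.
Context {R : realType} {V : lmodType R}.

(* A cone: closed under multiplication by positive scalars (may be empty,
   need not contain 0). *)
Definition is_cone (C : set V) : Prop :=
  forall (l : R) (x : V), 0 < l -> C x -> C (l *: x).

Definition negset (C : set V) : set V := [set x | C (- x)].

Definition antichain_convex (C : set V) (S : set V) : Prop :=
  forall (x y : V) (l : R), S x -> S y ->
    ~ (C `|` negset C) (y - x) -> 0 <= l <= 1 ->
    S (l *: x + (1 - l) *: y).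

Definition msum (A B : set V) : set V :=
  [set z | exists a b, A a /\ B b /\ z = a + b].

Definition msum_list (l : seq (set V)) : set V :=
  foldr msum [set 0] l.

Definition decomp_antichain_convex (C : set V) (S : set V) : Prop :=
  exists l : seq (set V), (0 < size l)%N /\
    (forall A, A \in l -> antichain_convex C A) /\ S = msum_list l.

Definition upward (C : set V) (S : set V) : Prop :=
  forall x y, S x -> C (y - x) -> S y.

Definition downward (C : set V) (S : set V) : Prop :=
  forall x y, S x -> C (x - y) -> S y.

Definition conv (S : set V) : set V :=
  [set z | exists (n : nat) (w : 'I_n -> R) (p : 'I_n -> V),
     (forall i, 0 <= w i) /\ \sum_(i < n) w i = 1 /\
     (forall i, S (p i)) /\ z = \sum_(i < n) w i *: p i].

End Defs.

(* Main.v *)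
Require Import Defs.
From HB Require Import structures.
From mathcomp Require Import all_boot all_order all_algebra.
From mathcomp Require Import boolp classical_sets reals.
From mathcomp Require Import ring lra.
Local Open Scope classical_set_scope.
Local Open Scope ring_scope.
Import Order.TTheory GRing.Theory Num.Theory.

Section Aux.
Variables (R : realType) (V : lmodType R).

Lemma idA (b x y : V) : b - (x + (b - y)) = y - x.
Proof. by rewrite opprD opprB addrA addrC addrA subrK. Qed.

Lemma id1 (a b : V) l : b - (l *: a + (1-l) *: b) = l *: (b - a).
Proof. by rewrite scalerBl scale1r scalerBr idA. Qed.

Lemma id2 (a b : V) l : a - (l *: a + (1-l) *: b) = (1 - l) *: (a - b).
Proof.
have -> : l *: a = a - (1 - l) *: a by rewrite scalerBl scale1r opprB addrC subrK.
by rewrite scalerBr opprD opprB addrA [a + _]addrC subrK.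
Qed.

Lemma idneg (u v : V) : - (u - v) = v - u.
Proof. by rewrite opprB. Qed.

Lemma idS (t x p q : V) : t - (x + q) = (t - (x + p)) + (p - q).
Proof. by rewrite !opprD !addrA subrK. Qed.

Variable D : set V.
Hypothesis D0 : D 0.
Hypothesis Dadd : forall a b, D a -> D b -> D (a + b).
Hypothesis Dscale : forall l k, 0 <= l -> D k -> D (l *: k).

Definition Pair (T : set V) := forall (a b : V) (l : R), T a -> T b -> 0 <= l <= 1 ->
  exists t, T t /\ D (t - (l *: a + (1 - l) *: b)).

Lemma pair_msum A B : Pair A -> Pair B -> Pair (msum A B).
Proof.
move=> PA PB a b l [a1 [a2 [Aa1 [Ba2 ->]]]] [b1 [b2 [Ab1 [Bb2 ->]]]] hl.
have [t1 [At1 D1]] := PA _ _ _ Aa1 Ab1 hl.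
have [t2 [Bt2 D2]] := PB _ _ _ Ba2 Bb2 hl.
exists (t1 + t2); split; first by exists t1, t2.
have -> : t1 + t2 - (l *: (a1 + a2) + (1 - l) *: (b1 + b2)) =
  (t1 - (l *: a1 + (1 - l) *: b1)) + (t2 - (l *: a2 + (1 - l) *: b2)).
  by rewrite !scalerDr (addrACA (l *: a1)) opprD addrACA.
exact: Dadd.
Qed.

Lemma pair_list (s : seq (set V)) : (forall A, A \in s -> Pair A) -> Pair (msum_list s).
Proof.
elim: s => [|A s IH] H /=.
  move=> a b l -> -> _; exists 0; split => //.
  by rewrite !scaler0 addr0 subrr.
apply: pair_msum; first by apply: H; rewrite in_cons eqxx.
by apply: IH => B HB; apply: H; rewrite in_cons HB orbT.
Qed.

Lemma step (Y : set V) b u l : Pair Y -> (exists t, Y t /\ D (t - u)) -> Y b ->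
  0 <= l <= 1 -> exists t, Y t /\ D (t - (l *: b + (1 - l) *: u)).
Proof.
move=> PY [t' [Yt' Dt']] Yb hl.
have [t [Yt Dt]] := PY _ _ _ Yb Yt' hl.
exists t; split => //.
have -> : t - (l *: b + (1 - l) *: u) =
   (t - (l *: b + (1 - l) *: t')) + (1 - l) *: (t' - u).
  by rewrite scalerBr (idS _ _ ((1 - l) *: t')).
apply: Dadd => //; apply: Dscale => //.
by move/andP: hl => [_ h]; rewrite subr_ge0.
Qed.

Lemma pair_conv_gen (Y : set V) : Pair Y -> forall n (w : 'I_n -> R) (p : 'I_n -> V),
  (forall i, 0 <= w i) -> (forall i, Y (p i)) -> 0 < \sum_(i < n) w i ->
  exists t, Y t /\ D (t - (\sum_(i < n) w i)^-1 *: \sum_(i < n) w i *: p i).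
Proof.
move=> PY; elim=> [|n IH] w p w0 Yp.
  by rewrite big_ord0 ltxx.
rewrite !big_ord_recr /=.
set s' := \sum_(i < n) w (widen_ord (leqnSn n) i).
set S' := \sum_(i < n) w (widen_ord (leqnSn n) i) *: p (widen_ord (leqnSn n) i).
set wn := w ord_max => hs.
have s'0 : 0 <= s' by apply: sumr_ge0 => i _.
have wn0 : 0 <= wn by apply: w0.
have [s'eq|s'pos] := eqVneq s' 0.
  have S'0 : S' = 0.
    apply: big1 => i _.
    have := (psumr_eq0P (fun j _ => w0 (widen_ord (leqnSn n) j)) s'eq) i isT.
    by move=> ->; rewrite scale0r.
  rewrite S'0 s'eq add0r; rewrite s'eq add0r in hs.
  exists (p ord_max); split => //.
  by rewrite add0r scalerA mulVf ?scale1r ?subrr // gt_eqF.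
have s'p : 0 < s' by rewrite lt_def s'pos.
have [t' [Yt' Dt']] := IH (fun i => w (widen_ord (leqnSn n) i))
   (fun i => p (widen_ord (leqnSn n) i)) (fun i => w0 _) (fun i => Yp _) s'p.
set s := s' + wn.
have sne : s != 0 by rewrite gt_eqF.
have -> : s^-1 *: (S' + wn *: p ord_max) =
   (wn / s) *: p ord_max + (1 - wn / s) *: (s'^-1 *: S').
  rewrite scalerA.
  have -> : (1 - wn / s) * s'^-1 = s^-1.
    rewrite /s; field.
    by apply/andP; split; rewrite ?gt_eqF.
  by rewrite scalerDr scalerA mulrC addrC.
apply: step => //; first by exists t'.
apply/andP; split; first by apply: divr_ge0 => //; apply: ltW.
by rewrite ler_pdivrMr // mul1r /s lerDr.
Qed.

Lemma pair_conv (Y : set V) : Pair Y -> forall z, conv Y z -> exists t, Y t /\ D (t - z).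
Proof.
move=> PY z [n [w [p [w0 [w1 [Yp ->]]]]]].
have := @pair_conv_gen Y PY n w p w0 Yp.
by rewrite w1 invr1 scale1r; apply; rewrite ltr01.
Qed.

End Aux.

Section Cone.
Arguments Pair {R V}.
Variables (R : realType) (V : lmodType R) (C : set V).
Hypothesis coneC : is_cone C.

Inductive K0 : V -> Prop :=
| K0_0 : K0 0
| K0_add c k : C c -> K0 k -> K0 (c + k).

Lemma K0_C c : C c -> K0 c.
Proof. by move=> Cc; rewrite -(addr0 c); apply: K0_add => //; apply: K0_0. Qed.

Lemma K0_add2 a b : K0 a -> K0 b -> K0 (a + b).
Proof.
elim=> [|c k Cc _ IH] Kb; first by rewrite add0r.
by rewrite -addrA; apply: K0_add => //; apply: IH.
Qed.

Lemma K0_scale l k : 0 <= l -> K0 k -> K0 (l *: k).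
Proof.
move=> l0 Kk; have [->|lne] := eqVneq l 0.
  by rewrite scale0r; apply: K0_0.
have lp : 0 < l by rewrite lt_def lne.
elim: Kk => [|c k' Cc _ IH]; first by rewrite scaler0; apply: K0_0.
by rewrite scalerDr; apply: K0_add => //; apply: coneC.
Qed.

Lemma K0_Cs l c : 0 <= l -> C c -> K0 (l *: c).
Proof. by move=> l0 Cc; apply: K0_scale => //; apply: K0_C. Qed.

Definition NK0 : set V := fun k => K0 (- k).

Lemma NK0_0 : NK0 0.
Proof. by rewrite /NK0 oppr0; apply: K0_0. Qed.
Lemma NK0_add a b : NK0 a -> NK0 b -> NK0 (a + b).
Proof. by rewrite /NK0 opprD; apply: K0_add2. Qed.
Lemma NK0_scale l k : 0 <= l -> NK0 k -> NK0 (l *: k).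
Proof. by rewrite /NK0 -scalerN; apply: K0_scale. Qed.

Lemma pair_up (T : set V) : antichain_convex C T -> Pair K0 T.
Proof.
move=> AT a b l Ta Tb hl.
have [l0 l1] : 0 <= l /\ l <= 1 by move/andP: hl.
have [Cba|nCba] := pselect (C (b - a)).
  by exists b; split => //; rewrite id1; apply: K0_Cs.
have [Cab|nCab] := pselect (C (a - b)).
  by exists a; split => //; rewrite id2; apply: K0_Cs; rewrite ?subr_ge0.
exists (l *: a + (1 - l) *: b); split; last by rewrite subrr; apply: K0_0.
apply: AT => //; case => //; rewrite /negset /= opprB //.
Qed.

Lemma pair_down (T : set V) : antichain_convex C T -> Pair NK0 T.
Proof.
move=> AT a b l Ta Tb hl.
have [l0 l1] : 0 <= l /\ l <= 1 by move/andP: hl.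
have [Cba|nCba] := pselect (C (b - a)).
  exists a; split => //; rewrite /NK0 id2 -scalerN opprB.
  by apply: K0_Cs; rewrite ?subr_ge0.
have [Cab|nCab] := pselect (C (a - b)).
  by exists b; split => //; rewrite /NK0 id1 -scalerN opprB; apply: K0_Cs.
exists (l *: a + (1 - l) *: b); split; last by rewrite /NK0 subrr oppr0; apply: K0_0.
apply: AT => //; case => //; rewrite /negset /= opprB //.
Qed.

Lemma K0_up (X : set V) x k : upward C X -> X x -> K0 k -> X (x + k).
Proof.
move=> up Xx; elim=> [|c k' Cc _ IH]; first by rewrite addr0.
apply: (up _ _ IH); by rewrite addrCA addrK.
Qed.

Lemma K0_down (X : set V) x k : downward C X -> X x -> K0 k -> X (x - k).
Proof.
move=> dn Xx; elim=> [|c k' Cc _ IH]; first by rewrite subr0.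
apply: (dn _ _ IH); by rewrite opprB addrC addrA subrK addrK.
Qed.

End Cone.

Theorem theorem6 (R : realType) (V : lmodType R) (C X Y : set V) :
  is_cone C ->
  decomp_antichain_convex C X -> decomp_antichain_convex C Y ->
  X `&` Y = set0 ->
  (upward C X -> conv X `&` conv Y = set0) /\
  (downward C X -> conv X `&` conv Y = set0).
Proof.
move=> cone [lx [_ [AX eX]]] [ly [_ [AY eY]]] XY.
pose K := K0 R V C; pose N := NK0 R V C.
have K00 : K 0 := K0_0 _ _ _.
have Kadd : forall a b, K a -> K b -> K (a + b) := @K0_add2 R V C.
have Kscale : forall l k, 0 <= l -> K k -> K (l *: k) := @K0_scale R V C cone.
have N00 : N 0 := NK0_0 _ _ _.
have Nadd : forall a b, N a -> N b -> N (a + b) := @NK0_add R V C.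
have Nscale : forall l k, 0 <= l -> N k -> N (l *: k) := @NK0_scale R V C cone.
have PXu : Pair R V K X.
  by rewrite eX; exact: (@pair_list R V _ K00 Kadd _ (fun A HA => @pair_up R V C cone A (AX A HA))).
have PYu : Pair R V K Y.
  by rewrite eY; exact: (@pair_list R V _ K00 Kadd _ (fun A HA => @pair_up R V C cone A (AY A HA))).
have PXd : Pair R V N X.
  by rewrite eX; exact: (@pair_list R V _ N00 Nadd _ (fun A HA => @pair_down R V C cone A (AX A HA))).
have PYd : Pair R V N Y.
  by rewrite eY; exact: (@pair_list R V _ N00 Nadd _ (fun A HA => @pair_down R V C cone A (AY A HA))).
have contra : forall y, X y -> Y y -> False.
  by move=> y Xy Yy; have : (X `&` Y) y by []; rewrite XY.
split => [up|dn]; apply/seteqP; split => // z [cXz cYz].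
  have [x [Xx Nx]] := @pair_conv R V _ N00 Nadd Nscale _ PXd _ cXz.
  have [y [Yy Ky]] := @pair_conv R V _ K00 Kadd Kscale _ PYu _ cYz.
  apply: (contra y) => //.
  have -> : y = x + ((z - x) + (y - z)) by rewrite addrA (addrC x) subrK addrC subrK.
  apply: K0_up up Xx _; apply: Kadd => //.
  by move: Nx; rewrite /N /NK0 opprB.
have [x [Xx Kx]] := @pair_conv R V _ K00 Kadd Kscale _ PXu _ cXz.
have [y [Yy Ny]] := @pair_conv R V _ N00 Nadd Nscale _ PYd _ cYz.
apply: (contra y) => //.
have -> : y = x - ((x - z) + (z - y)) by rewrite opprD opprB opprB addrA (addrC x) subrK addrC subrK.
apply: K0_down dn Xx _; apply: Kadd => //.
by move: Ny; rewrite /N /NK0 opprB.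
Qed.
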